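(* Let $C>0$, $\epsilon>0$, positive integers $s\le N$ and $K$ be fixed, let $L=\frac{4}{3}s\ln\left(\frac{eN}{s}\right)+\frac{14}{3}s+\frac{4}{3}\ln\frac{2}{\epsilon}$, and define $$\beta_{\mathrm{serial}}(p,\delta,K)=\left[\ln\frac{1-pe^{-C\delta^2}}{1-p+p(1-e^{-C\delta^2})(pe^{-C\delta^2})^K}\right]^{-1}L,\quad \beta_{\mathrm{star}}(p,\delta)=\left[\ln\frac{1}{1-p+pe^{-C\delta^2}}\right]^{-1}L,\quad \beta(\delta)=\frac{L}{C\delta^2}.$$ Then (i) for all $p\in[0,1]$ and $\delta\in(0,1)$, $\beta_{\mathrm{serial}}(p,\delta,K)\ge\beta_{\mathrm{star}}(p,\sqrt{K}\delta)\ge\beta(\sqrt{K}\delta)/p$; (ii) for fixed $\delta\in(0,1)$ and $K$, $\beta_{\mathrm{serial}}(p,\delta,K)$ is a strictly decreasing function of $p\in[0,1]$.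
   Context: Conventions: $1/0=+\infty$, so these quantities equal $+\infty$ at $p=0$. *)

(* Defs.v *)
(* R : realType, extended reals \bar R for 1/0 = +oo. *)
From mathcomp Require Import all_boot all_order all_algebra.
From mathcomp Require Import all_classical all_reals all_analysis.
Set Implicit Arguments. Unset Strict Implicit. Unset Printing Implicit Defensive.
Import Order.TTheory GRing.Theory Num.Theory.
Local Open Scope ring_scope.

Section Defs.
Variable R : realType.

Definition einv (x : R) : \bar R := if x == 0 then +oo%E else (x^-1)%:E.

Definition Lconst (eps : R) (s N : nat) : R :=
  4/3 * s%:R * ln (expR 1 * N%:R / s%:R) + 14/3 * s%:R + 4/3 * ln (2 / eps).

Definition beta_serial (C L p d : R) (K : nat) : \bar R :=
  let q := expR (- (C * d ^+ 2)) in
  (einv (ln ((1 - p * q) / (1 - p + p * (1 - q) * (p * q) ^+ K))) * L%:E)%E.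

Definition beta_star (C L p d : R) : \bar R :=
  (einv (ln (1 / (1 - p + p * expR (- (C * d ^+ 2))))) * L%:E)%E.

Definition beta (C L d : R) : R := L / (C * d ^+ 2).

End Defs.

(* Main.v *)
Require Import Defs.
From mathcomp Require Import all_boot all_order all_algebra.
From mathcomp Require Import all_classical all_reals all_analysis.
From mathcomp Require Import ring lra.
Import Order.TTheory GRing.Theory Num.Theory.
Local Open Scope ring_scope.

Section Helpers.
Variable R : realType.

Lemma einv_le (x y L : R) : 0 <= y -> y <= x -> 0 < L ->
  (einv x * L%:E <= einv y * L%:E)%E.
Proof.
move=> y0 yx L0; rewrite /einv.
have [_|yn0] := eqVneq y 0.
  by rewrite gt0_mulye ?lte_fin // leey.
have y0' : 0 < y by rewrite lt0r yn0.
have x0 : 0 < x by exact: lt_le_trans yx.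
rewrite gt_eqF // -!EFinM lee_fin ler_pM2r // lef_pV2 ?posrE //.
Qed.

Lemma einv_lt (x y L : R) : 0 <= y -> y < x -> 0 < L ->
  (einv x * L%:E < einv y * L%:E)%E.
Proof.
move=> y0 yx L0; rewrite /einv.
have x0 : 0 < x by exact: le_lt_trans yx.
rewrite gt_eqF //.
have [_|yn0] := eqVneq y 0.
  by rewrite gt0_mulye ?lte_fin // -EFinM ltry.
have y0' : 0 < y by rewrite lt0r yn0.
rewrite -!EFinM lte_fin ltr_pM2r // ltf_pV2 ?posrE //.
Qed.

Lemma exp_conv (p a b : R) : 0 <= p -> p <= 1 ->
  expR (p * a + (1 - p) * b) <= p * expR a + (1 - p) * expR b.
Proof.
move=> p0 p1; have := convex_expR (Itv01 p0 p1) a b.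
by rewrite !convRE /=.
Qed.

Definition S (K : nat) (u : R) := \sum_(i < K) u ^+ i.

Lemma S_geo K u : 1 - u ^+ K = (1 - u) * S K u.
Proof. by rewrite /S -[LHS]opprB subrX1 -mulNr opprB. Qed.

Lemma S_le K u v : 0 <= u -> u <= v -> S K u <= S K v.
Proof.
move=> u0 uv; apply: ler_sum => i _; apply: lerXn2r => //; rewrite nnegrE //.
exact: le_trans uv.
Qed.

Lemma S_ge1 K u : (0 < K)%N -> 0 <= u -> 1 <= S K u.
Proof.
case: K => // K _ u0; rewrite /S big_ord_recl expr0 lerDl.
by apply: sumr_ge0 => i _; apply: exprn_ge0.
Qed.

Lemma serial_eq K (p q : R) : 0 <= p <= 1 -> 0 < q < 1 ->
  let X := 1 - p * (1 - q) * S K (p * q) in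
  0 < X /\ (1 - p * q) / (1 - p + p * (1 - q) * (p * q) ^+ K) = X^-1.
Proof.
move=> /andP[p0 p1] /andP[q0 q1] X.
have pq1 : p * q < 1 by apply: le_lt_trans (ler_piMl _ p1) q1; exact: ltW.
have hD : 1 - p + p * (1 - q) * (p * q) ^+ K = (1 - p * q) * X.
  have -> : (1 - p*q) * X = (1 - p*q) - p*(1-q)*((1-p*q)*S K (p*q)) by rewrite /X; ring.
  by rewrite -S_geo; ring.
have D0 : 0 < 1 - p + p * (1 - q) * (p * q) ^+ K.
  have [->|pn0] := eqVneq p 0; first by rewrite !mul0r subr0 addr0.
  have p0' : 0 < p by rewrite lt0r pn0.
  apply: (@le_lt_trans _ _ (0 + 0)); first by rewrite addr0.
  apply: ler_ltD; first by rewrite subr_ge0.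
  apply: mulr_gt0; first by apply: mulr_gt0 => //; rewrite subr_gt0.
  by apply: exprn_gt0; apply: mulr_gt0.
have pq0 : 0 < 1 - p * q by rewrite subr_gt0.
have X0 : 0 < X by move: D0; rewrite hD pmulr_rgt0.
split => //.
by rewrite hD invfM mulrA mulfV ?gt_eqF // mul1r.
Qed.

End Helpers.
Arguments S {R}.
Arguments serial_eq {R} K {p q}.
Arguments S_ge1 {R K u}.
Arguments exp_conv {R}.
Arguments S_geo {R}.
Arguments S_le {R}.

Theorem proposition4 (R : realType) (C eps : R) (s N K : nat) :
  0 < C -> 0 < eps -> eps < 1 -> (0 < s)%N -> (s <= N)%N -> (0 < K)%N ->
  let L := Lconst eps s N in
  (forall p delta : R, 0 <= p <= 1 -> 0 < delta < 1 ->
     (beta_star C L p (Num.sqrt K%:R * delta)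
        <= beta_serial C L p delta K)%E /\
     ((beta C L (Num.sqrt K%:R * delta))%:E * einv p
        <= beta_star C L p (Num.sqrt K%:R * delta))%E) /\
  (forall delta : R, 0 < delta < 1 ->
     forall p1 p2 : R, 0 <= p1 -> p1 < p2 -> p2 <= 1 ->
       (beta_serial C L p2 delta K < beta_serial C L p1 delta K)%E).
Proof.
move=> C0 e0 e1 s0 sN K0 L.
have L0 : 0 < L.
  rewrite /L /Lconst.
  have hc : 0 < 4/3 * ln (2 / eps) :> R.
    rewrite mulr_gt0 // ln_gt0 // ltr_pdivlMr // mul1r.
    by apply: lt_le_trans e1 _; rewrite ler1n.
  have hb : 0 < 14/3 * s%:R :> R by rewrite mulr_gt0 // ltr0n.
  have ha : 0 <= 4/3 * s%:R * ln (expR 1 * N%:R / s%:R) :> R.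
    rewrite mulr_ge0 ?mulr_ge0 // ln_ge0 // ler_pdivlMr ?ltr0n // mul1r.
    have eN : 1 <= N%:R :> R by rewrite ler1n; exact: leq_trans sN.
    have sN' : s%:R <= N%:R :> R by rewrite ler_nat.
    apply: le_trans sN' _; rewrite ler_peMl ?ler0n //.
    by rewrite -[1]expR0 ler_expR.
  lra.
have hq : forall delta : R, 0 < delta < 1 ->
    0 < expR (- (C * delta ^+ 2)) < 1.
  move=> d /andP[d0 d1]; rewrite expR_gt0 expR_lt1 oppr_lt0.
  by rewrite mulr_gt0 // exprn_gt0.
have hQ : forall delta : R,
    expR (- (C * (Num.sqrt K%:R * delta) ^+ 2)) = expR (- (C * delta ^+ 2)) ^+ K.
  move=> d; rewrite exprMn sqr_sqrtr ?ler0n // -expRM_natl; congr expR; ring.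
split.
  move=> p d hp hd; have /andP[q0 q1] := hq d hd.
  have /andP[p0 p1] := hp.
  set q := expR (- (C * d ^+ 2)) in q0 q1.
  have [X0 eqs] := serial_eq K hp (hq d hd).
  set X := 1 - p * (1 - q) * S K (p * q) in X0 eqs.
  split.
    rewrite /beta_serial /beta_star /= -/q eqs hQ -/q.
    have hY : 1 - p + p * q ^+ K = 1 - p * (1 - q) * S K q.
      by have := S_geo K q; rewrite -mulrA => <-; ring.
    have Y0 : 0 < 1 - p + p * q ^+ K.
      apply: (@lt_le_trans _ _ (q ^+ K)); first exact: exprn_gt0.
      rewrite -subr_ge0.
      have -> : 1 - p + p * q ^+ K - q ^+ K = (1 - p) * (1 - q ^+ K) by ring.
      rewrite mulr_ge0 // ?subr_ge0 // exprn_ile1 // ltW //.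
    apply: einv_le => //.
      apply: ln_ge0; rewrite invf_ge1 // lerBlDr lerDl.
      rewrite mulr_ge0 // ?mulr_ge0 // ?subr_ge0 ?ltW //.
      by apply: (lt_le_trans ltr01); apply: S_ge1 => //; rewrite mulr_ge0 // ltW.
    rewrite ler_ln ?posrE ?invr_gt0 ?div1r ?invr_gt0 // lef_pV2 ?posrE //.
    rewrite hY lerD2l lerN2; apply: ler_wpM2l; first by rewrite mulr_ge0 // subr_ge0 ltW.
    apply: S_le; first by rewrite mulr_ge0 // ltW.
    by rewrite ler_piMl // ltW.
  set x := C * (Num.sqrt K%:R * d) ^+ 2.
  have x0 : 0 < x.
    rewrite mulr_gt0 // exprn_gt0 // mulr_gt0 // ?sqrtr_gt0 ?ltr0n //.
    by case/andP: hd.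
  rewrite /beta_star /beta -/x.
  have [->|pn0] := eqVneq p 0.
    rewrite mul0r subr0 addr0 divr1 ln1 /einv eqxx gt0_muley ?lte_fin ?divr_gt0 //.
    by rewrite gt0_mulye ?lte_fin.
  have p0' : 0 < p by rewrite lt0r pn0.
  set D := 1 - p + p * expR (- x).
  have ex1 : expR (- x) < 1 by rewrite expR_lt1 oppr_lt0.
  have D0 : 0 < D.
    by rewrite /D; have := expR_gt0 (- x); nra.
  have D1 : D < 1.
    by rewrite /D; nra.
  have y0 : 0 < ln (1 / D) by rewrite ln_gt0 // div1r invf_gt1.
  rewrite /einv (gt_eqF p0') (gt_eqF y0) -!EFinM lee_fin.
  have hy : ln (1 / D) <= p * x.
    rewrite div1r lnV ?posrE // lerNl -[X in X <= _]expRK ler_ln ?posrE ?expR_gt0 //.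
    have := exp_conv p (- x) 0 (ltW p0') p1.
    by rewrite mulr0 addr0 expR0 mulr1 mulrN /D addrC.
  rewrite -mulrA -invfM [_ * L]mulrC ler_pM2l //.
  by rewrite lef_pV2 ?posrE ?(mulrC x) // mulr_gt0.
move=> d hd p1 p2 p10 p12 p21.
have p20 : 0 < p2 by exact: le_lt_trans p12.
have /andP[q0 q1] := hq d hd.
have [X10 eq1] := serial_eq K (p:=p1) (ltac:(by rewrite p10 (ltW (lt_le_trans p12 p21)))) (hq d hd).
have [X20 eq2] := serial_eq K (p:=p2) (ltac:(by rewrite (ltW p20) p21)) (hq d hd).
rewrite /beta_serial /= eq1 eq2.
set q := expR (- (C * d ^+ 2)) in q0 q1 X10 X20 eq1 eq2 *.
apply: einv_lt => //.
  apply: ln_ge0; rewrite invf_ge1 // lerBlDr lerDl.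
  rewrite mulr_ge0 // ?mulr_ge0 // ?subr_ge0 ?ltW //.
  by apply: (lt_le_trans ltr01); apply: S_ge1 => //; rewrite mulr_ge0 // ltW.
rewrite ltr_ln ?posrE ?invr_gt0 // ltf_pV2 ?posrE // ltrD2l ltrN2.
rewrite -!mulrA [p1 * _]mulrCA [p2 * _]mulrCA ltr_pM2l ?subr_gt0 //.
have S2 : 0 < S K (p2 * q) by apply: lt_le_trans (S_ge1 K0 _); rewrite ?mulr_ge0 // ltW.
apply: (@le_lt_trans _ _ (p1 * S K (p2 * q))).
  apply: ler_wpM2l => //; apply: S_le; [by rewrite mulr_ge0 // ltW | by rewrite ler_pM2r // ltW].
by rewrite ltr_pM2r.
Qed.
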